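(* Let $r \geq 2$, let $\mathcal{F}$ be a collection of $r$-uniform hypergraphs, let $0<p<1$, let $\epsilon>0$, and let $c = c(p,\mathcal{F})$. Then there exist $\eta, \gamma, \lambda > 0$, an integer $m$ and $n_0$ (depending only on $\mathcal{F}, p, \epsilon$) such that the following holds. Let $V$ be a vertex set of size $n > n_0$ and let $\mathcal{A}$ be a collection of $r$-uniform hypergraphs on $V$ with $\mu_n(\mathcal{A}) > 2^{(-c+\epsilon)\binom{n}{r}}$. Let $\mathcal{D} = \{D_1,\ldots,D_d\}$ be a partial Steiner system with parameters $(r,m,n)$ on $V$ with $d \geq (1-\lambda)\binom{n}{r}\binom{m}{r}^{-1}$. Let \[ I = \{ i \in [d] : \mu_n(\{G \in \mathcal{A} : \mathcal{F} < G[D_i]\}) \geq \gamma\, \mu_n(\mathcal{A})\}. \] Then $|I| \geq \eta d$.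
   Context: $G(k,p)$ denotes the random $r$-uniform hypergraph on $k$ labelled vertices in which each $r$-subset is an edge independently with probability $p$; for a collection $\mathcal{C}$ of $r$-uniform hypergraphs on a common $k$-vertex set, $\mu_k(\mathcal{C}) = \Pr[G(k,p) \in \mathcal{C}]$. The constant $c(p,\mathcal{F})$ is defined by $\Pr[G(n,p)$ has no induced subgraph isomorphic to a member of $\mathcal{F}] = 2^{(-c+o(1))\binom{n}{r}}$ as $n\to\infty$ (this limit exists). For a hypergraph $G$ and vertex subset $D$, $G[D]$ is the induced subhypergraph on $D$, and $\mathcal{F} < H$ means $H$ contains an induced subgraph isomorphic to a member of $\mathcal{F}$. A partial Steiner system with parameters $(r,m,n)$ on an $n$-set $V$ is a collection $\mathcal{D}$ of $m$-element subsets of $V$ such that every $r$-element subset of $V$ is contained in at most one member of $\mathcal{D}$. *)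

(* Defs.v *)
From HB Require Import structures.
From mathcomp Require Import all_boot all_order all_algebra.
From mathcomp Require Import boolp classical_sets reals exp.
Set Implicit Arguments. Unset Strict Implicit. Unset Printing Implicit Defensive.
Import Order.TTheory GRing.Theory Num.Theory.
Local Open Scope ring_scope.

Definition hypergraph (T : finType) := {set {set T}}.

Definition uniform (r : nat) (T : finType) (G : hypergraph T) : bool :=
  [forall e in G, #|e| == r].

(* A family F of r-uniform hypergraphs, each member given (up to
   isomorphism) on a labelled vertex set 'I_k. *)
Definition hfamily := forall k : nat, hypergraph 'I_k -> Prop.

(* F < H : H contains an induced subhypergraph isomorphic to a member of F.
   An injection f : 'I_k -> T gives an isomorphism between the pulled-back
   hypergraph on 'I_k and the induced subhypergraph H[f('I_k)]. *)
Definition contains (F : hfamily) (T : finType) (H : hypergraph T) : Prop :=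
  exists (k : nat) (f : 'I_k -> T), injective f /\
    F k [set e : {set 'I_k} | (f @: e) \in H].

Definition induced (T : finType) (G : hypergraph T) (D : {set T}) :
  hypergraph {x : T | x \in D} :=
  [set e : {set {x : T | x \in D}} | ((fun x => val x) @: e) \in G].

(* mu(C) = Pr[G(T,p) \in C] for the random r-uniform hypergraph on T,
   each r-subset being an edge independently with probability p. *)
Definition mu (R : realType) (r : nat) (p : R) (T : finType)
  (C : pred (hypergraph T)) : R :=
  \sum_(G : hypergraph T | uniform r G && C G)
     p ^+ #|G| * (1 - p) ^+ ('C(#|T|, r) - #|G|).

Definition free_prob (R : realType) (r : nat) (p : R) (F : hfamily) (k : nat) : R :=
  mu r p (fun G : hypergraph 'I_k => ~~ `[< contains F G >]).

(* c = c(p,F): Pr[G(n,p) F-free] = 2^{(-c+o(1)) C(n,r)}. *)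
Definition is_c (R : realType) (r : nat) (p : R) (F : hfamily) (c : R) : Prop :=
  forall delta : R, 0 < delta -> exists N : nat, forall n : nat, (N <= n)%N ->
    powR 2 ((- c - delta) * ('C(n, r))%:R) <= free_prob r p F n /\
    free_prob r p F n <= powR 2 ((- c + delta) * ('C(n, r))%:R).

Definition partial_steiner (T : finType) (r m d : nat) (D : 'I_d -> {set T}) : Prop :=
  injective D /\ (forall i, #|D i| = m) /\
  (forall S : {set T}, #|S| = r -> #|[set i | S \subset D i]| <= 1)%N.

(* Main.v *)
Require Import Defs.
From HB Require Import structures.
From mathcomp Require Import all_boot all_order all_algebra.
From mathcomp Require Import boolp classical_sets reals exp.
From mathcomp Require Import fintype finset bigop.
From mathcomp Require Import zify ring lra.
Import Order.TTheory GRing.Theory Num.Theory.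
Local Open Scope ring_scope.
Set Implicit Arguments. Unset Strict Implicit. Unset Printing Implicit Defensive.

Section Gen.
Variables (R : realType) (p : R).
Variable X : finType.

Definition om (U S : {set X}) : R := \prod_(x in U) (if x \in S then p else 1 - p).
Definition Ex (U : {set X}) (h : {set X} -> R) : R :=
  \sum_(S : {set X} | S \subset U) om U S * h S.

Lemma Ex_ext (U : {set X}) (f g : {set X} -> R) : (forall S : {set X}, S \subset U -> f S = g S) -> Ex U f = Ex U g.
Proof. by move=> H; apply: eq_bigr => S /H ->. Qed.

Lemma om_I (U S : {set X}) : om U S = om U (S :&: U).
Proof. by apply: eq_bigr => x xU; rewrite in_setI xU andbT. Qed.

Lemma om_U (U1 U2 S : {set X}) : [disjoint U1 & U2] -> om (U1 :|: U2) S = om U1 S * om U2 S.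
Proof.
move=> dj; rewrite /om -bigU //; apply: eq_bigl => x; by rewrite !inE.
Qed.

Lemma Ex_split (U1 U2 : {set X}) (f g : {set X} -> R) :
  [disjoint U1 & U2] ->
  Ex (U1 :|: U2) (fun S => f (S :&: U1) * g (S :&: U2)) = Ex U1 f * Ex U2 g.
Proof.
move=> dj; rewrite /Ex mulr_suml.

symmetry; under eq_bigr do rewrite mulr_sumr.
rewrite pair_big /=; symmetry.
rewrite (reindex_onto (fun q : {set X} * {set X} => q.1 :|: q.2)
                      (fun S => (S :&: U1, S :&: U2))) /=; last first.
  by move=> S sS; rewrite -setIUr; apply/setIidPl.
have dj' : forall x, x \in U1 -> x \in U2 -> False.
  by move=> x x1 x2; move/disjoint_setI0/setP: dj => /(_ x); rewrite !inE x1 x2.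
apply: eq_big => [[A B]|[A B]] /=.
  apply/idP/idP.
    by case/andP=> _ /eqP [<- <-]; rewrite !subsetIr.
  case/andP=> sA sB; rewrite subUset (subset_trans sA (subsetUl _ _))
      (subset_trans sB (subsetUr _ _)) /=.
  apply/eqP; congr (_, _); apply/setP => x; rewrite !inE.
    case xA: (x \in A); first by rewrite /= (subsetP sA).
    case xB: (x \in B) => //=; apply/negP => x1.
    by apply: (dj' x x1 (subsetP sB x xB)).
  case xB: (x \in B); first by rewrite orbT /= (subsetP sB).
  case xA: (x \in A) => //=; apply/negP => x2.
  by apply: (dj' x (subsetP sA x xA) x2).
case/andP=> _ /eqP [eA eB].
rewrite om_U // eA eB [om U1 _]om_I [om U2 _]om_I eA eB.
by rewrite -!mulrA; congr (_ * _); rewrite mulrCA.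
Qed.

Lemma Ex_total (U : {set X}) : Ex U (fun _ => 1) = 1.
Proof.
move: {2}#|U| (erefl #|U|) => n; elim: n U => [|n IH] U cU.
  move/eqP: cU; rewrite cards_eq0 => /eqP ->.
  rewrite /Ex (big_pred1 set0) ?/om ?big_set0 ?mulr1 // => S.
  by rewrite subset0.
have [x xU] : exists x, x \in U.
  by apply/set0Pn; rewrite -cards_eq0 cU.
have -> : U = [set x] :|: (U :\ x) by rewrite setD1K.
have dj : [disjoint [set x] & U :\ x].
  by rewrite disjoints_subset; apply/subsetP => y; rewrite !inE => /eqP ->; rewrite eqxx.
rewrite (Ex_ext (g := fun S => (fun _ => 1) (S :&: [set x]) * (fun _ => 1) (S :&: (U :\ x))));
  last by move=> S _; rewrite mulr1.
rewrite (Ex_split (fun _ : {set X} => 1) (fun _ : {set X} => 1) dj) (IH (U :\ x)); last by move: cU; rewrite (cardsD1 x U) xU add1n => -[].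
rewrite mulr1 /Ex.
rewrite (eq_bigl (fun S => S \in [set set0; [set x]])); last first.
  by move=> S; rewrite -powerset1 powersetE.
rewrite big_setU1 /=; last first.
  rewrite inE; apply/negP => /eqP /setP /(_ x); rewrite !inE eqxx //.
rewrite big_set1 /om !big_set1 !inE eqxx !mulr1.
by rewrite subrK.
Qed.

Lemma Ex_restrict (U B : {set X}) (h : {set X} -> R) :
  B \subset U -> Ex U (fun S => h (S :&: B)) = Ex B h.
Proof.
move=> sBU.
have eU : U = B :|: (U :\: B).
  by apply/setP => x; rewrite !inE; case xB: (x \in B); rewrite ?andbT // (subsetP sBU).
have dj : [disjoint B & U :\: B].
  by rewrite disjoints_subset; apply/subsetP => y; rewrite !inE => yB; rewrite yB.
rewrite eU (Ex_ext (g := fun S => h (S :&: B) * (fun _ => 1) (S :&: (U :\: B))));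
  last by move=> S _; rewrite mulr1.
by rewrite (Ex_split h (fun _ : {set X} => 1) dj) Ex_total mulr1.
Qed.

Lemma Ex_prod (I : eqType) (s : seq I) (B : I -> {set X}) (h : I -> {set X} -> R) :
  forall U : {set X}, uniq s -> (forall i, i \in s -> B i \subset U) ->
  (forall i j, i \in s -> j \in s -> i != j -> [disjoint B i & B j]) ->
  Ex U (fun S => \prod_(i <- s) h i (S :&: B i)) = \prod_(i <- s) Ex (B i) (h i).
Proof.
elim: s => [|i0 s IH] U us sB dB.
  rewrite big_nil (Ex_ext (g := fun _ => 1)) ?Ex_total // => S _.
  by rewrite big_nil.
rewrite big_cons.
move: us => /= /andP [i0s us].
set U' := U :\: B i0.
have sBU := sB i0 (mem_head _ _).
have eU : U = B i0 :|: U'.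
  by apply/setP => x; rewrite !inE; case xB: (x \in B i0); rewrite ?andbT // (subsetP sBU).
have dj : [disjoint B i0 & U'].
  by rewrite disjoints_subset; apply/subsetP => y; rewrite !inE => yB; rewrite yB.
have sB' : forall i, i \in s -> B i \subset U'.
  move=> i is_; rewrite subsetD sB ?inE ?is_ ?orbT //= disjoint_sym dB //.
  - by rewrite inE eqxx.
  - by rewrite inE is_ orbT.
  - by apply/eqP => e; rewrite e is_ in i0s.
rewrite eU (Ex_ext (g := fun S => h i0 (S :&: B i0) *
   (fun T => \prod_(i <- s) h i (T :&: B i)) (S :&: U'))); last first.
  move=> S _; rewrite big_cons; congr (_ * _).
  apply: eq_big_seq => i is_; congr (h i _).
  by rewrite -setIA; congr (_ :&: _); apply/esym/setIidPr/sB'.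
rewrite (Ex_split (h i0) (fun T => \prod_(i <- s) h i (T :&: B i)) dj) IH //.
move=> i j is_ js; apply: dB; by rewrite inE ?is_ ?js orbT.
Qed.

End Gen.

Lemma Ex_iso (R : realType) (p : R) (X Y : finType) (psi : Y -> X) (U : {set Y}) (h : {set X} -> R) :
  injective psi -> Ex p (psi @: U) h = Ex p U (fun S => h (psi @: S)).
Proof.
move=> ipsi; rewrite /Ex.
rewrite (reindex_onto (fun S : {set Y} => psi @: S) (fun S => psi @^-1: S :&: U)) /=;
  last first.
  move=> S sS; apply/setP => x; apply/imsetP/idP.
    by case=> y; rewrite !inE => /andP [yS _] ->.
  move=> xS; have /imsetP [y yU exy] := subsetP sS x xS.
  by exists y; rewrite // !inE -exy xS yU.
apply: eq_big => [S|S].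
  apply/idP/idP.
    by case/andP => _ /eqP <-; rewrite subsetIr.
  move=> sSU; rewrite imsetS //=; apply/eqP/setP => y.
  rewrite !inE mem_imset //; case yS: (y \in S) => //=; by rewrite (subsetP sSU).
case/andP => _ /eqP eS.
congr (_ * _).
rewrite /om big_imset /=; last by move=> a b _ _; apply: ipsi.
by apply: eq_bigr => y _; rewrite mem_imset.
Qed.


Section Gen2.
Variables (R : realType) (p : R).
Hypotheses (p0 : 0 <= p) (p1 : p <= 1).
Variable X : finType.

Lemma om_ge0 (U S : {set X}) : 0 <= om p U S.
Proof. by apply: prodr_ge0 => x _; case: ifP; rewrite ?subr_ge0. Qed.

Lemma Ex_le (U : {set X}) (f g : {set X} -> R) :
  (forall S : {set X}, S \subset U -> f S <= g S) -> Ex p U f <= Ex p U g.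
Proof. by move=> H; apply: ler_sum => S /H fg; apply: ler_wpM2l => //; apply: om_ge0. Qed.

Lemma Ex_ge0 (U : {set X}) (f : {set X} -> R) :
  (forall S : {set X}, S \subset U -> 0 <= f S) -> 0 <= Ex p U f.
Proof. by move=> H; apply: sumr_ge0 => S /H fg; apply: mulr_ge0 => //; apply: om_ge0. Qed.

Lemma Ex_add (U : {set X}) (f g : {set X} -> R) :
  Ex p U (fun S => f S + g S) = Ex p U f + Ex p U g.
Proof. by rewrite /Ex -big_split /=; apply: eq_bigr => S _; rewrite mulrDr. Qed.

Lemma Ex_scale (U : {set X}) (a : R) (f : {set X} -> R) :
  Ex p U (fun S => a * f S) = a * Ex p U f.
Proof. by rewrite /Ex mulr_sumr; apply: eq_bigr => S _; rewrite mulrCA. Qed.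

Lemma Ex_sum (I : finType) (U : {set X}) (f : I -> {set X} -> R) :
  Ex p U (fun S => \sum_i f i S) = \sum_i Ex p U (f i).
Proof.
rewrite /Ex exchange_big /=; apply: eq_bigr => S _; by rewrite mulr_sumr.
Qed.
End Gen2.

Definition ind (R : realType) (b : bool) : R := if b then 1 else 0.

Definition UV (T : finType) (r : nat) := [set e : {set T} | #|e| == r].

Lemma om_pow (R : realType) (p : R) (X : finType) (U G : {set X}) :
  G \subset U -> om p U G = p ^+ #|G| * (1 - p) ^+ (#|U| - #|G|).
Proof.
move=> sGU; rewrite /om (bigID (fun x => x \in G)) /=.
rewrite (eq_bigr (fun _ => p)); last by move=> x /andP [_ ->].
rewrite [X in _ * X](eq_bigr (fun _ => 1 - p)); last by move=> x /andP [_ /negbTE ->].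
rewrite (eq_bigl (fun x => x \in U :&: G)); last by move=> x; rewrite inE.
rewrite [X in _ * X](eq_bigl (fun x => x \in U :\: G)); last by move=> x; rewrite !inE andbC.
by rewrite !prodr_const cardsD (setIidPr sGU).
Qed.

Lemma mu_Ex (R : realType) (r : nat) (p : R) (T : finType) (C : pred (hypergraph T)) :
  mu r p C = Ex p (UV T r) (fun S => ind R (C S)).
Proof.
rewrite /mu /Ex big_mkcondr /=.
apply: eq_big => [G|G sG].
  apply/forall_inP/subsetP => H e; first by move=> /H eG; rewrite inE.
  by move=> /H; rewrite inE.
have sG' : G \subset UV T r.
  by apply/subsetP => e eG; move/forall_inP: sG => /(_ e eG); rewrite inE.
by rewrite om_pow // /UV card_draws /ind; case: (C G); rewrite ?mulr1 ?mulr0.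
Qed.

Lemma contains_iso (F : hfamily) (T1 T2 : finType) (sg : T1 -> T2) (rh : T2 -> T1)
  (H1 : hypergraph T1) (H2 : hypergraph T2) :
  cancel sg rh -> cancel rh sg -> (forall e, (e \in H1) = (sg @: e \in H2)) ->
  contains F H1 <-> contains F H2.
Proof.
move=> sK rK Hi; split => [[k [f [fi Fk]]]|[k [g [gi Fk]]]].
  exists k, (sg \o f); split; first exact: inj_comp (can_inj sK) fi.
  suff -> : [set e : {set 'I_k} | (sg \o f) @: e \in H2] = [set e : {set 'I_k} | f @: e \in H1] by [].
  by apply/setP => e; rewrite !inE imset_comp Hi.
exists k, (rh \o g); split; first exact: inj_comp (can_inj rK) gi.
suff -> : [set e : {set 'I_k} | (rh \o g) @: e \in H1] = [set e : {set 'I_k} | g @: e \in H2] by [].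
apply/setP => e; rewrite !inE Hi -!imset_comp.
by rewrite (eq_imset _ (fun x => rK (g x))) imset_comp imset_id.
Qed.

Definition Bl (T : finType) (r : nat) (D : {set T}) :=
  [set e : {set T} | (#|e| == r) && (e \subset D)].

Lemma Bl_sub (T : finType) r (D : {set T}) : Bl r D \subset UV T r.
Proof. by apply/subsetP => e; rewrite !inE => /andP []. Qed.

Lemma induced_restrict (T : finType) r (D : {set T}) (S : hypergraph T) :
  S \subset UV T r -> induced S D = induced (S :&: Bl r D) D.
Proof.
move=> sS; apply/setP => e; rewrite !inE.
case eS: (_ \in S) => //=.
have := subsetP sS _ eS; rewrite inE => -> /=.
by apply/esym/subsetP => y /imsetP [z _ ->]; exact: valP z.
Qed.

Lemma transport (R : realType) (r : nat) (p : R) (F : hfamily) (V : finType)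
  (D : {set V}) (m : nat) : #|D| = m ->
  Ex p (UV V r) (fun S => ind R (~~ `[< contains F (induced S D) >])) = free_prob r p F m.
Proof.
move=> cDm.
pose h := fun T : hypergraph V => ind R (~~ `[< contains F (induced T D) >]).
rewrite (Ex_ext p (g := fun S => h (S :&: Bl r D))); last first.
  by move=> S sS; rewrite /h -induced_restrict.
rewrite Ex_restrict; last exact: Bl_sub.
pose Dsub := {x : V | x \in D}.
have cD : #|{: Dsub}| = m by rewrite card_sig -cDm.
pose sg := fun i : 'I_m => (enum_val (cast_ord (esym cD) i) : Dsub).
pose rh := fun x : Dsub => cast_ord cD (enum_rank x).
have sK : cancel sg rh by move=> i; rewrite /sg /rh enum_valK cast_ordKV.
have rK : cancel rh sg by move=> x; rewrite /sg /rh cast_ordK enum_rankK.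
pose phi := fun i : 'I_m => val (sg i).
have phii : injective phi by move=> a b /val_inj /(can_inj sK).
have eB : Bl r D = (fun e : {set 'I_m} => phi @: e) @: UV 'I_m r.
  apply/setP => e; rewrite inE; apply/andP/imsetP.
    case=> /eqP er eD.
    have ee : e = phi @: (phi @^-1: e).
      apply/setP => x; apply/idP/imsetP.
        move=> xe; have xD := subsetP eD x xe.
        exists (rh (exist _ x xD)); last by rewrite /phi rK.
        by rewrite inE /phi rK.
      by case=> y; rewrite inE => ye ->.
    exists (phi @^-1: e); last exact: ee.
    by rewrite inE -(card_imset _ phii) -ee er.
  case=> e1; rewrite inE => /eqP e1r ->; split.
    by rewrite (card_imset _ phii) e1r.
  by apply/subsetP => y /imsetP [z _ ->]; exact: valP (sg z).
rewrite eB Ex_iso; last exact: imset_inj.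
rewrite /free_prob mu_Ex; apply: Ex_ext => S _.
rewrite /h; congr (ind R (~~ _)); apply: asbool_equiv_eq.
apply: iff_sym; apply: (contains_iso _ sK rK) => e.
rewrite !inE -imset_comp mem_imset //; exact: imset_inj.
Qed.

Lemma steiner_disj (V : finType) r m d (D : 'I_d -> {set V}) :
  partial_steiner r m D -> forall i j, i != j -> [disjoint Bl r (D i) & Bl r (D j)].
Proof.
case=> _ [_ hS] i j ij; rewrite disjoints_subset; apply/subsetP => e.
rewrite !inE => /andP [/eqP er ei]; apply/negP => /andP [_ ej].
have h1 : [set i; j] \subset [set k | e \subset D k].
  by apply/subsetP => k; rewrite !inE => /orP [] /eqP ->.
have := leq_trans (subset_leq_card h1) (hS e er).
by rewrite cards2 ij.
Qed.

Lemma bin_ge (a r : nat) : (0 < r)%N -> (a < 'C(a + r, r))%N.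
Proof.
case: r => // r _; elim: a => [|a IH]; first by rewrite add0n binn.
rewrite addSn binS.
have : (0 < 'C(a + r.+1, r))%N by rewrite bin_gt0; lia.
move: IH; lia.
Qed.

Lemma powR_sum (R : realType) (I : finType) (f : I -> R) :
  \prod_i powR 2 (f i) = powR 2 (\sum_i f i).
Proof.
elim/big_rec2: _ => [|i y1 y2 _ ->]; first by rewrite powRr0.
by rewrite powRD //; apply/implyP => _; rewrite pnatr_eq0.
Qed.
Lemma numeric (R : realType) (c eps th M Nn d : R) :
 0 < eps -> eps/2 <= c -> 0 < th -> th <= 1/2 -> th * (32 * c) <= eps ->
 16 <= M * eps -> 16 <= Nn * eps -> 0 <= d -> (1 - th) * Nn <= d * M ->
 d + 1 + (-c + eps/8) * M * ((1 - th) * d) <= (-c + eps) * Nn.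
Proof.
move=> e0 ce t0 t1 tc Me Ne d0 dM.
have M0 : 0 < M by nra.
have N0 : 0 < Nn by nra.
set K := 1 - (c - eps/8) * M * (1 - th).
have hK3 : 3 <= (c - eps/8) * M * (1 - th).
  have h1 : 3 * eps / 8 <= c - eps/8 by lra.
  have h2 : 1/2 <= 1 - th by lra.
  have h3 : 3 * eps / 8 * M <= (c - eps/8) * M by nra.
  have h4 : 3 * eps / 8 * M * (1/2) <= (c - eps/8) * M * (1 - th).
    apply: (le_trans (y := (c - eps/8) * M * (1/2))); first nra. nra.
  nra.
have hK : K <= 0 by rewrite /K; lra.
have e1 : d + 1 + (-c + eps/8) * M * ((1 - th) * d) = 1 + d * K by rewrite /K; ring.
rewrite e1.
have h5 : d * M * K <= (1 - th) * Nn * K by nra.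
have h6 : (1 - th) * Nn * K = (1 - th) * Nn - (1-th)^+2 * (c - eps/8) * Nn * M by rewrite /K; ring.
have h7 : c - eps/8 - eps/16 <= (1-th)^+2 * (c - eps/8).
  have : (1 - 2 * th) * (c - eps/8) <= (1-th)^+2 * (c - eps/8) by nra.
  nra.
have NM : 0 <= Nn * M by nra.
have h8 : (c - eps/8 - eps/16) * (Nn * M) <= (1-th)^+2 * (c - eps/8) * Nn * M.
  by have := ler_wpM2r NM h7; rewrite !mulrA.
have h9 : M * (1 + d * K) <= M * ((-c + eps) * Nn).
  have : M <= M * Nn * eps / 16 by nra.
  have : Nn <= M * Nn * eps / 16 by nra.
  nra.
by rewrite -(ler_pM2l M0).
Qed.

Lemma powR2_ge1 (R : realType) (x : R) : 0 <= x -> 1 <= powR 2 x.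
Proof. move=> hx. by have := @ler_powR R 2 ltac:(lra) 0 x hx; rewrite powRr0. Qed.

Lemma powR2_le (R : realType) (x y : R) : x <= y -> powR 2 x <= powR 2 y.
Proof. move=> hx. exact: (@ler_powR R 2 ltac:(lra) x y hx). Qed.

Lemma powR2D (R : realType) (x y : R) : powR 2 (x + y) = powR 2 x * powR 2 y.
Proof. by rewrite powRD //; apply/implyP => _; rewrite pnatr_eq0. Qed.

Theorem lemma5 (R : realType) (r : nat) (F : hfamily) (p eps c : R) :
  (2 <= r)%N ->
  (forall k (H : hypergraph 'I_k), F k H -> uniform r H) ->
  0 < p -> p < 1 -> 0 < eps ->
  is_c r p F c ->
  exists (eta gamma lambda : R) (m n0 : nat),
    [/\ 0 < eta, 0 < gamma & 0 < lambda] /\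
    forall (V : finType) (n : nat), #|V| = n -> (n0 < n)%N ->
    forall A : {set hypergraph V},
      (forall G, G \in A -> uniform r G) ->
      mu r p (fun G => G \in A) > powR 2 ((- c + eps) * ('C(n, r))%:R) ->
    forall (d : nat) (D : 'I_d -> {set V}),
      partial_steiner r m D ->
      d%:R >= (1 - lambda) * ('C(n, r))%:R / ('C(m, r))%:R ->
      let I := [set i : 'I_d |
                 mu r p (fun G => (G \in A) && `[< contains F (induced G (D i)) >])
                   >= gamma * mu r p (fun G => G \in A)] in
      #|I|%:R >= eta * d%:R.
Proof.
move=> hr hF hp0 hp1 heps hc.
have p0 : 0 <= p by apply: ltW.
have p1 : p <= 1 by apply: ltW.
pose del := eps / 8.
have del0 : 0 < del by rewrite /del; lra.
have [N hN] := hc del del0.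
pose Dn := 32 * (`|c| + 1) + 2 * eps.
have Dn0 : 0 < Dn by rewrite /Dn; have := normr_ge0 c; lra.
pose th := eps / Dn.
have thD : th * Dn = eps by rewrite /th divfK // gt_eqF.
have th0 : 0 < th by rewrite /th divr_gt0.
have th1 : th <= 1/2.
  have : th * (2 * eps) <= th * Dn by rewrite ler_pM2l // /Dn; have := normr_ge0 c; lra.
  rewrite thD => h; nra.
have thc : th * (32 * `|c|) <= eps.
  rewrite -thD ler_pM2l // /Dn; have := normr_ge0 c; lra.
pose K := (Num.truncn (16 / eps)).+1.
have hK : 16 / eps < K%:R by exact: Num.Theory.truncnS_gt.
pose m := (N + K + r)%N.
exists (th/4), (th/4), th, m, (K + r)%N.
split; first by split; lra.
move=> V n hV hn A hA hmu d D hst hd; cbv zeta.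
set I := [set i : 'I_d | _].

pose U := UV V r.
pose w := mu r p (fun G => G \in A).
pose Nn : R := ('C(n, r))%:R.
pose M : R := ('C(m, r))%:R.
have hNn : 16 <= Nn * eps.
  have h1 : (K <= 'C(n, r))%N.
    have e : n = ((n - r) + r)%N by rewrite subnK //; apply: leq_trans (leq_addl K r) (ltnW hn).
    have := bin_ge (n - r) (ltn_trans (isT : (0 < 1)%N) hr); rewrite -e => h.
    apply: leq_trans (ltnW h); rewrite leq_subRL; last by apply: leq_trans (leq_addl K r) (ltnW hn).
    by rewrite addnC ltnW.
  have h2 : K%:R <= Nn by rewrite /Nn ler_nat.
  have : 16 / eps * eps < Nn * eps by rewrite ltr_pM2r //; exact: lt_le_trans hK h2.
  by rewrite divfK ?gt_eqF //; apply: ltW.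
have hM : 16 <= M * eps.
  have h1 : (K <= 'C(m, r))%N.
    have := bin_ge (N + K) (ltn_trans (isT : (0 < 1)%N) hr) => h.
    apply: leq_trans (ltnW h); exact: leq_addl.
  have h2 : K%:R <= M by rewrite /M ler_nat.
  have : 16 / eps * eps < M * eps by rewrite ltr_pM2r //; exact: lt_le_trans hK h2.
  by rewrite divfK ?gt_eqF //; apply: ltW.
have M0 : 0 < M.
  by rewrite /M ltr0n bin_gt0 /m leq_addl.
have N0 : 0 < Nn.
  by rewrite /Nn ltr0n bin_gt0; apply: leq_trans (leq_addl K r) (ltnW hn).
have w0 : 0 < w by apply: lt_trans hmu; apply: powR_gt0.
have w1 : w <= 1.
  rewrite /w mu_Ex -(Ex_total p U); apply: (Ex_le p0 p1) => S _.
  by rewrite /ind; case: (S \in A).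
have [hce|hce] := ltP c (eps / 2).
  exfalso.
  have h1 : 1 <= powR 2 ((- c + eps) * Nn).
    by apply: powR2_ge1; apply: mulr_ge0; lra.
  have h2 : powR 2 ((- c + eps) * Nn) < w by [].
  have := lt_le_trans (le_lt_trans h1 h2) w1; by rewrite ltxx.
have c0 : 0 <= c by lra.
have thc' : th * (32 * c) <= eps by rewrite -(ger0_norm c0).
rewrite leNgt; apply/negP => hI.
have d0 : 0 < d%:R :> R.
  have h : 0 < th / 4 * d%:R by apply: le_lt_trans (ler0n R #|I|) hI.
  by rewrite pmulr_rgt0 ?divr_gt0 in h.
pose cont := fun (i : 'I_d) (S : hypergraph V) => `[< contains F (induced S (D i)) >].
pose Y := fun S : hypergraph V => \sum_(i < d) ind R (cont i S).
have Y0 : forall S, 0 <= Y S.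
  by move=> S; apply: sumr_ge0 => i _; rewrite /ind; case: (cont i S).
have hsum : \sum_(i < d) mu r p (fun G => (G \in A) && cont i G)
            <= #|I|%:R * w + d%:R * (th / 4 * w).
  have tw : 0 <= th / 4 * w by apply: mulr_ge0; [apply: divr_ge0; [exact: ltW | by []] | exact: ltW].
  apply: (le_trans (y := \sum_(i < d) ((if i \in I then w else 0) + th / 4 * w))).
    apply: ler_sum => i _.
    case hiI: (i \in I).
      apply: (le_trans (y := w)); last by rewrite lerDl.
      rewrite /w !mu_Ex; apply: (Ex_le p0 p1) => S _.
      by rewrite /ind; case: (S \in A); case: (cont i S).
    move: hiI; rewrite /I inE => /negbT; rewrite -ltNge => h.
    rewrite add0r; exact: ltW.
  rewrite big_split /= -big_mkcond !sumr_const card_ord.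
  by rewrite -[w *+ _]mulr_natl -[_ *+ d]mulr_natl.
have hsumE : \sum_(i < d) mu r p (fun G => (G \in A) && cont i G)
              = Ex p U (fun S => ind R (S \in A) * Y S).
  rewrite (eq_bigr (fun i => Ex p U (fun S => ind R ((S \in A) && cont i S)))); last first.
    by move=> i _; rewrite mu_Ex.
  rewrite -Ex_sum; apply: Ex_ext => S _; rewrite /Y mulr_sumr; apply: eq_bigr => i _.
  by rewrite /ind; case: (S \in A); case: (cont i S); rewrite ?mul1r ?mul0r.
pose P1 := Ex p U (fun S => ind R (S \in A) * ind R (th * d%:R < Y S)).
pose P2 := Ex p U (fun S => ind R (S \in A) * ind R (Y S <= th * d%:R)).
have hw : w = P1 + P2.
  rewrite /w mu_Ex /P1 /P2 -Ex_add; apply: Ex_ext => S _.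
  rewrite /ind; case: (S \in A); rewrite ?mul0r ?addr0 // !mul1r.
  by case: leP; rewrite ?addr0 ?add0r.
have hP1 : P1 <= w / 2.
  have h1 : th * d%:R * P1 <= Ex p U (fun S => ind R (S \in A) * Y S).
    rewrite /P1 -Ex_scale; apply: (Ex_le p0 p1) => S _.
    rewrite /ind; case: (S \in A); rewrite ?mul0r ?mulr0 // !mul1r.
    by case: ltP => h; rewrite ?mulr1 ?mulr0 // ltW.
  rewrite -hsumE in h1.
  have h2 := le_trans h1 hsum.
  have h3 : #|I|%:R * w < th / 4 * d%:R * w by rewrite ltr_pM2r.
  have h4 : th * d%:R * P1 < th * d%:R * (w / 2).
    apply: le_lt_trans h2 _.
    have -> : th * d%:R * (w / 2) = th / 4 * d%:R * w + d%:R * (th / 4 * w) by field.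
    by rewrite ltrD2r.
  have thd : 0 < th * d%:R by apply: mulr_gt0.
  by rewrite ltr_pM2l // in h4; apply: ltW.
pose a := (-c + del) * M.
have a0 : a <= 0 by rewrite /a; apply: mulr_le0_ge0; [rewrite /del; lra | exact: ltW].
pose z := powR 2 (-a).
have hprod : forall S, \prod_(i < d) (if cont i S then 1 else z) = powR 2 (-a * (d%:R - Y S)).
  move=> S; rewrite (eq_bigr (fun i => powR 2 (-a * (1 - ind R (cont i S))))); last first.
    by move=> i _; rewrite /ind; case: (cont i S); rewrite ?subrr ?mulr0 ?powRr0 ?subr0 ?mulr1.
  by rewrite powR_sum -mulr_sumr sumrB sumr_const card_ord /Y.
have hP2 : P2 <= powR 2 (a * ((1 - th) * d%:R)) *
                 Ex p U (fun S => \prod_(i < d) (if cont i S then 1 else z)).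
  rewrite -Ex_scale; apply: (Ex_le p0 p1) => S _; rewrite hprod -powR2D.
  rewrite /ind; case: (S \in A); rewrite ?mul0r ?powR_ge0 // mul1r.
  case: (leP (Y S) (th * d%:R)) => h /=; last exact: powR_ge0.
  apply: powR2_ge1.
  have -> : a * ((1 - th) * d%:R) + - a * (d%:R - Y S) = a * (Y S - th * d%:R) by ring.
  by apply: mulr_le0 => //; rewrite subr_le0.
have z1 : 1 <= z by apply: powR2_ge1; rewrite oppr_ge0.
have zQ : z * powR 2 a = 1 by rewrite /z -powR2D addNr powRr0.
have cardD : forall i, #|D i| = m by move=> i; case: hst => _ [] ->.
have hq : forall i, Ex p U (fun S => ind R (~~ cont i S)) <= powR 2 a.
  move=> i; rewrite /cont /U (transport _ _ _ (cardD i)).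
  have [_ ] := hN m (leq_trans (leq_addr K N) (leq_addr r _)).
  done.
have hq0 : forall i, 0 <= Ex p U (fun S => ind R (~~ cont i S)).
  by move=> i; apply: (Ex_ge0 p0 p1) => S _; rewrite /ind; case: (~~ _).
have hE : Ex p U (fun S => \prod_(i < d) (if cont i S then 1 else z)) <= 2 ^+ d.
  rewrite (Ex_ext p (g := fun S => \prod_(i <- index_enum 'I_d)
      (fun i T => if cont i T then 1 else z) i (S :&: Bl r (D i)))); last first.
    by move=> S sS; apply: eq_bigr => i _ /=; rewrite /cont -induced_restrict.
  rewrite (Ex_prod p (fun i T => if cont i T then 1 else z) (s := index_enum 'I_d)
    (B := fun i => Bl r (D i))); last first.
  - by move=> i j _ _; exact: steiner_disj hst i j.
  - by move=> i _; exact: Bl_sub.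
  - exact: index_enum_uniq.
  have -> : (2 : R) ^+ d = \prod_(i < d) 2 by rewrite prodr_const card_ord.
  apply: ler_prod => i _; apply/andP; split.
    apply: (Ex_ge0 p0 p1) => S _; case: (cont i S) => //; exact: powR_ge0.
  rewrite -(Ex_restrict p (U := U)); last exact: Bl_sub.
  rewrite (Ex_ext p (g := fun S => 1 + (z - 1) * ind R (~~ cont i S))); last first.
    move=> S sS /=; rewrite /cont -induced_restrict // /ind.
    by case: (`[< _ >]) => /=; rewrite ?mulr0 ?addr0 ?mulr1 // addrC subrK.
  rewrite Ex_add Ex_total Ex_scale.
  have h1 := hq i; have h2 := hq0 i.
  have h3 : (z - 1) * Ex p U (fun S => ind R (~~ cont i S)) <= (z - 1) * powR 2 a.
    by apply: ler_wpM2l; rewrite ?subr_ge0.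
  have h4 : 0 <= powR 2 a by exact: powR_ge0.
  have h5 : (z - 1) * powR 2 a <= 1 by rewrite mulrBl zQ mul1r lerBlDr lerDl.
  have : (1 : R) + 1 = 2 by [].
  lra.
have hw2 : w <= 2 * P2 by move: hP1; rewrite hw; lra.
have hfin : w <= powR 2 (d%:R + 1 + a * ((1 - th) * d%:R)).
  apply: (le_trans hw2).
  have hQ0 : 0 <= powR 2 (a * ((1 - th) * d%:R)) by exact: powR_ge0.
  have h1 : 2 * P2 <= 2 * (powR 2 (a * ((1 - th) * d%:R)) * 2 ^+ d).
    rewrite ler_pM2l //; apply: (le_trans hP2); exact: ler_wpM2l.
  apply: (le_trans h1).
  suff -> : powR 2 (d%:R + 1 + a * ((1 - th) * d%:R)) =
            2 * (powR 2 (a * ((1 - th) * d%:R)) * 2 ^+ d) by [].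
  rewrite addrC powR2D natr1 powR_mulrn // exprS; ring.
have hdM : (1 - th) * Nn <= d%:R * M.
  by rewrite -ler_pdivrMr.
have hnum := numeric heps hce th0 th1 thc' hM hNn (ler0n R d) hdM.
have : powR 2 (d%:R + 1 + a * ((1 - th) * d%:R)) <= powR 2 ((- c + eps) * Nn).
  apply: powR2_le; exact: hnum.
move=> h; have := lt_le_trans hmu (le_trans hfin h); by rewrite ltxx.
Qed.
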